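(* Let $m$ be an odd positive integer and $q\geq 1$. Then $m\#Q_q$ divides $Q_{m+q}$.
   Context: $Q_q$ denotes the $q$-dimensional hypercube graph (vertices are $q$-tuples of $0$'s and $1$'s, adjacent iff they differ in exactly one coordinate). For a graph $G$ and $m\geq 1$, $m\#G$ is the graph obtained by taking two disjoint copies $G'$ and $G''$ of $G$ and joining each vertex $v'\in V(G')$ to the corresponding vertex $v''\in V(G'')$ by a path with $m$ edges, these new paths being internally vertex-disjoint from each other and from $G'\cup G''$. For graphs $H$ and $G$, ''$H$ divides $G$'' means there is a collection of subgraphs $H_i$ of $G$, each isomorphic to $H$, such that $E(G)$ is the disjoint union of the edge sets $E(H_i)$. *)

(* Defs.v *)
From mathcomp Require Import all_boot.
Set Implicit Arguments. Unset Strict Implicit. Unset Printing Implicit Defensive.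

(* A (simple) graph is given by a finite vertex type V and a symmetric,
   irreflexive adjacency relation adj : rel V. *)

Definition edges (V : finType) (adj : rel V) : {set {set V}} :=
  [set [set p.1; p.2] | p : V * V & adj p.1 p.2].

Definition image_edges (U V : finType) (adjH : rel U) (f : U -> V)
  : {set {set V}} :=
  [set [set f p.1; f p.2] | p : U * U & adjH p.1 p.2].

(* A subgraph isomorphic to H is given by an
   injective map f : V(H) -> V(G) sending edges to edges; the copy H_i is the
   subgraph with vertex set f(V(H)) and edge set image_edges adjH f. *)
Definition divides (U : finType) (adjH : rel U) (V : finType) (adjG : rel V)
  : Prop :=
  exists (k : nat) (f : 'I_k -> U -> V),
    [/\ forall i, injective (f i),
        forall i x y, adjH x y -> adjG (f i x) (f i y),
        forall i j, i != j -> [disjoint image_edges adjH (f i)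
                                 & image_edges adjH (f j)]
      & \bigcup_(i < k) image_edges adjH (f i) = edges adjG].

Definition hcube_vertex (q : nat) := {ffun 'I_q -> bool}.
Definition hcube_adj (q : nat) : rel (hcube_vertex q) :=
  fun x y => #|[set i | x i != y i]| == 1.

(* Vertices: (b, v) is the copy v' (b = false) or v'' (b = true) of v;
   (v, i), i < m-1, is the i-th internal vertex of the path joining v' to v''.
   Along the path of v the positions are: v' at 0, (v,i) at i+1, v'' at m. *)
Definition sharp_vertex (m : nat) (V : finType) : finType :=
  ((bool * V) + (V * 'I_(m.-1)))%type.

Definition sharp_base (m : nat) (V : finType) (w : sharp_vertex m V) : V :=
  match w with inl (_, v) => v | inr (v, _) => v end.

Definition sharp_pos (m : nat) (V : finType) (w : sharp_vertex m V) : nat :=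
  match w with
  | inl (false, _) => 0
  | inl (true, _) => m
  | inr (_, i) => (nat_of_ord i).+1
  end.

Definition sharp_adj (m : nat) (V : finType) (adj : rel V)
  : rel (sharp_vertex m V) :=
  fun w1 w2 =>
    match w1, w2 with
    | inl (b1, v1), inl (b2, v2) => (b1 == b2) && adj v1 v2
    | _, _ => false
    end
    || ((sharp_base w1 == sharp_base w2) &&
        ((sharp_pos w1 == (sharp_pos w2).+1) ||
         (sharp_pos w2 == (sharp_pos w1).+1))).

Arguments sharp_adj m {V} adj.
Arguments hcube_adj q : clear implicits.

(* Main.v *)
Require Import Defs.
From mathcomp Require Import all_boot zify.
Set Implicit Arguments. Unset Strict Implicit. Unset Printing Implicit Defensive.

Section S.
Variables m q : nat.

Definition join (y : hcube_vertex m) (v : hcube_vertex q) : hcube_vertex (m + q) :=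
  [ffun k => match split k with inl i => y i | inr j => v j end].

Lemma join_l y v i : join y v (lshift q i) = y i.
Proof. by rewrite ffunE (unsplitK (inl _ i)). Qed.
Lemma join_r y v j : join y v (rshift m j) = v j.
Proof. by rewrite ffunE (unsplitK (inr _ j)). Qed.

Lemma join_inj y v y' v' : join y v = join y' v' -> y = y' /\ v = v'.
Proof.
move=> E; split; apply/ffunP => i.
  by rewrite -(join_l y v) E join_l.
by rewrite -(join_r y v) E join_r.
Qed.

Lemma join_surj (a : hcube_vertex (m + q)) :
  a = join [ffun i => a (lshift q i)] [ffun j => a (rshift m j)].
Proof.
apply/ffunP => k; rewrite ffunE -[in LHS](splitK k).
by case: (split k) => i /=; rewrite ffunE.
Qed.
End S.

Lemma cardsE' n (P : pred 'I_n) : #|[set i | P i]| = \sum_(i < n) (P i : nat).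
Proof.
rewrite -sum1_card big_mkcond /=; apply: eq_bigr => i _; rewrite inE.
by case: (P i).
Qed.

Lemma card_join m q (y y' : hcube_vertex m) (v v' : hcube_vertex q) :
  #|[set k | join y v k != join y' v' k]| =
  #|[set i | y i != y' i]| + #|[set j | v j != v' j]|.
Proof.
rewrite !cardsE' big_split_ord /=.
by congr (_ + _); apply: eq_bigr => i _; rewrite ?join_l ?join_r.
Qed.

Definition pth m (x : hcube_vertex m) (j : nat) : hcube_vertex m :=
  [ffun i : 'I_m => x i (+) (i < j)].
Definition par m (x : hcube_vertex m) : bool := \big[addb/false]_(i < m) x i.

Lemma pthK m (x : hcube_vertex m) j : pth (pth x j) j = x.
Proof. by apply/ffunP => i; rewrite !ffunE -addbA addbb addbF. Qed.

Lemma pth0 m (x : hcube_vertex m) : pth x 0 = x.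
Proof. by apply/ffunP => i; rewrite !ffunE addbF. Qed.

Lemma par_odd m (x : hcube_vertex m) : par x = odd (\sum_(i < m) (x i : nat)).
Proof.
rewrite /par (big_morph odd oddD (erefl (odd 0))).
by apply: eq_bigr => i _; case: (x i).
Qed.

Lemma sum_lt m j : \sum_(i < m) ((i < j) : nat) = minn j m.
Proof.
elim: m => [|m IH]; first by rewrite big_ord0 minn0.
rewrite big_ord_recr /= IH; case: (ltnP m j) => h /=; lia.
Qed.

Lemma par_pth m (x : hcube_vertex m) j : par (pth x j) = par x (+) odd (minn j m).
Proof.
rewrite /par /pth.
rewrite (eq_bigr (fun i : 'I_m => x i (+) (i < j))); last by move=> i _; rewrite ffunE.
rewrite big_split /=; congr (_ (+) _).
rewrite -sum_lt (big_morph odd oddD (erefl (odd 0))).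
by apply: eq_bigr => i _; case: (i < j).
Qed.

Lemma pth_pos_inj m (x : hcube_vertex m) a b :
  a <= m -> b <= m -> pth x a = pth x b -> a = b.
Proof.
move=> am bm E.
have key : forall a b, a <= m -> b <= m -> a < b -> pth x a = pth x b -> False.
  move=> c d cm dm cd E'.
  have := congr1 (fun f : hcube_vertex m => f (Ordinal (leq_trans cd dm))) E'.
  by rewrite !ffunE /= ltnn cd; case: (x _).
case: (ltngtP a b) => // h; first by case: (key a b).
by case: (key b a).
Qed.

Lemma diff_pthS m (x : hcube_vertex m) c : c < m ->
  #|[set i | pth x c i != pth x c.+1 i]| = 1.
Proof.
move=> cm; apply/eqP/cards1P; exists (Ordinal cm); apply/setP => i.
rewrite !inE !ffunE -val_eqE /= ltnS.
by case: (ltngtP i c) => h; case: (x i).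
Qed.

Lemma diff0 n (x y : hcube_vertex n) : (#|[set i | x i != y i]| == 0) = (x == y).
Proof.
rewrite cards_eq0; apply/eqP/eqP => [E|->].
  apply/ffunP => i; apply/eqP; apply/negPn/negP => h.
  by have := in_set0 i; rewrite -E inE h.
by apply/setP => i; rewrite !inE eqxx.
Qed.

Lemma hadj_neq n (x y : hcube_vertex n) : hcube_adj n x y -> x != y.
Proof. by rewrite /hcube_adj => /eqP h; rewrite -diff0 h. Qed.

Section Sh.
Variables m q : nat.
Notation W := (sharp_vertex m (hcube_vertex q)).

Lemma pos_le (w : W) : sharp_pos w <= m.
Proof. case: w => [[[] v]|[v i]] //=; have := ltn_ord i; lia. Qed.

Lemma pos_base_inj (w1 w2 : W) : 0 < m ->
  sharp_pos w1 = sharp_pos w2 -> sharp_base w1 = sharp_base w2 -> w1 = w2.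
Proof.
move=> m0.
case: w1 => [[b1 v1]|[v1 i1]]; case: w2 => [[b2 v2]|[v2 i2]] /=.
- by case: b1; case: b2 => //= h ->; try lia.
- by have := ltn_ord i2; case: b1 => /=; lia.
- by have := ltn_ord i1; case: b2 => /=; lia.
- move=> [h] ->; congr inr; congr pair; exact: val_inj.
Qed.

Lemma sharp_class (w1 w2 : W) : sharp_adj m (hcube_adj q) w1 w2 ->
  (hcube_adj q (sharp_base w1) (sharp_base w2) /\ sharp_pos w1 = sharp_pos w2 /\
     (sharp_pos w1 = 0 \/ sharp_pos w1 = m)) \/
  (sharp_base w1 = sharp_base w2 /\
     (sharp_pos w1 = (sharp_pos w2).+1 \/ sharp_pos w2 = (sharp_pos w1).+1)).
Proof.
rewrite /sharp_adj; case/orP.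
  case: w1 => [[b1 v1]|[v1 i1]]; case: w2 => [[b2 v2]|[v2 i2]] //= /andP[/eqP <- h].
  left; split => //.
  by case: b1; split => //; [right|left].
case/andP => /eqP h /orP[] /eqP h'; right; split => //; [left|right] => //.
Qed.

Lemma exists_pos j (v : hcube_vertex q) : j <= m ->
  exists w : W, sharp_pos w = j /\ sharp_base w = v.
Proof.
move=> jm.
case: (posnP j) => [->|j0]; first by exists (inl (false, v)).
case: (eqVneq j m) => [->|jnm]; first by exists (inl (true, v)).
have h : j.-1 < m.-1 by lia.
by exists (inr (v, Ordinal h)) => /=; split => //; lia.
Qed.
End Sh.

Lemma arith_half m a1 a2 b1 b2 : a1 <= m -> b1 <= m -> a2 <= m -> b2 <= m ->
  (a1 = a2.+1 \/ a2 = a1.+1) -> (b1 = b2.+1 \/ b2 = b1.+1) -> odd a1 = odd b1 ->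
  (forall i, i < m -> (i < a1) (+) (i < b1) = (i < a2) (+) (i < b2)) -> a1 < b1 -> False.
Proof.
move=> a1m b1m a2m b2m ha hb hodd H lt.
have nb : b1 != a1.+1.
  by apply/eqP => e; move: hodd; rewrite e /=; case: (odd a1).
have h1 := H a1 ltac:(lia).
rewrite ltnn lt /= in h1.
have e2 : (a1 < b2) = true by lia.
rewrite e2 in h1.
have e3 : a2 = a1.-1 by move: h1; case: ltnP => //; lia.
have h2 := H a1.-1 ltac:(lia).
have f1 : (a1.-1 < a1) = true by lia.
have f2 : (a1.-1 < b1) = true by lia.
have f3 : (a1.-1 < a2) = false by apply/negbTE; lia.
have f4 : (a1.-1 < b2) = true by lia.
by rewrite f1 f2 f3 f4 in h2.
Qed.

Lemma arith m a1 a2 b1 b2 : a1 <= m -> b1 <= m -> a2 <= m -> b2 <= m ->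
  (a1 = a2.+1 \/ a2 = a1.+1) -> (b1 = b2.+1 \/ b2 = b1.+1) -> odd a1 = odd b1 ->
  (forall i, i < m -> (i < a1) (+) (i < b1) = (i < a2) (+) (i < b2)) -> a1 = b1.
Proof.
move=> ? ? ? ? ha hb hodd H.
case: (ltngtP a1 b1) => // lt.
  by case: (arith_half (m:=m) (a1 := a1) (a2 := a2) (b1 := b1) (b2 := b2)).
case: (arith_half (m:=m) (a1 := b1) (a2 := b2) (b1 := a1) (b2 := a2)) => //.
by move=> i im; rewrite addbC H // addbC.
Qed.

Definition F m q (x : hcube_vertex m) (w : sharp_vertex m (hcube_vertex q)) :
  hcube_vertex (m + q) := join (pth x (sharp_pos w)) (sharp_base w).

Lemma par_pthE m (x : hcube_vertex m) j : j <= m -> par (pth x j) = par x (+) odd j.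
Proof. by move=> jm; rewrite par_pth; congr (_ (+) odd _); lia. Qed.

Lemma core m q (x x' : hcube_vertex m) (w1 w2 u1 u2 : sharp_vertex m (hcube_vertex q)) :
  odd m -> par x = false -> par x' = false ->
  F x w1 = F x' u1 -> F x w2 = F x' u2 ->
  sharp_adj m (hcube_adj q) w1 w2 -> sharp_adj m (hcube_adj q) u1 u2 -> x = x'.
Proof.
move=> om px px' /join_inj[e1 eb1] /join_inj[e2 eb2] /sharp_class hw /sharp_class hu.
have hpos := pos_le w1; have := pos_le w2; have := pos_le u1; have := pos_le u2.
move=> pu2 pu1 pw2.
set a1 := sharp_pos w1 in e1 hw hpos *; set a2 := sharp_pos w2 in e2 hw pw2 *.
set b1 := sharp_pos u1 in e1 hu pu1 *; set b2 := sharp_pos u2 in e2 hu pu2 *.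
have hodd : odd a1 = odd b1.
  by have := congr1 (@par m) e1; rewrite !par_pthE // px px'.
suff ab : a1 = b1 by move: e1; rewrite ab => /(congr1 (fun f : hcube_vertex m => pth f b1)); rewrite !pthK.
case: hw => [[/hadj_neq nb [ea hw]]|[eb hw]]; case: hu => [[/hadj_neq nb' [eb' hu]]|[eb' hu]].
- case: hw hu => h1 [] h2; rewrite h1 h2 // in hodd *; move: hodd; rewrite /= om //.
- by move: nb; rewrite eb1 eb2 eb' eqxx.
- by move: nb'; rewrite -eb1 -eb2 eb eqxx.
- apply: (arith (m := m) (a2 := a2) (b2 := b2)) => // i im.
  have := congr1 (fun f : hcube_vertex m => f (Ordinal im)) e1.
  have := congr1 (fun f : hcube_vertex m => f (Ordinal im)) e2.
  rewrite !ffunE /=.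
  by case: (x _); case: (x' _); case: (i < a1); case: (i < b1);
     case: (i < a2); case: (i < b2).
Qed.

Lemma diff_sym n (a b : hcube_vertex n) :
  [set i | a i != b i] = [set i | b i != a i].
Proof. by apply/setP => i; rewrite !inE eq_sym. Qed.

Lemma diff_refl n (a : hcube_vertex n) : #|[set i | a i != a i]| = 0.
Proof. by apply/eqP; rewrite diff0. Qed.

Lemma F_adj m q (x : hcube_vertex m) (w1 w2 : sharp_vertex m (hcube_vertex q)) :
  sharp_adj m (hcube_adj q) w1 w2 -> hcube_adj (m + q) (F x w1) (F x w2).
Proof.
move=> /sharp_class [[ha [ea _]]|[eb hp]]; rewrite /hcube_adj /F card_join.
  by rewrite ea diff_refl add0n.
rewrite eb diff_refl addn0.
have := pos_le w1; have := pos_le w2.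
case: hp => ->; move=> *.
  by rewrite diff_sym diff_pthS //; lia.
by rewrite diff_pthS //; lia.
Qed.

Lemma set2_eq (T : finType) (a b c d : T) : [set a; b] = [set c; d] -> a != b ->
  (a = c /\ b = d) \/ (a = d /\ b = c).
Proof.
move=> E nab.
have : a \in [set c; d] by rewrite -E set21.
have : b \in [set c; d] by rewrite -E set22.
case/set2P => hb; case/set2P => ha; subst; rewrite ?eqxx // in nab; by [left|right].
Qed.

Lemma pth_comm m (z : hcube_vertex m) a b : pth (pth z a) b = pth (pth z b) a.
Proof. by apply/ffunP => i; rewrite !ffunE -!addbA (addbC (i < a)). Qed.

Lemma sharp_adj_sym m q (w1 w2 : sharp_vertex m (hcube_vertex q)) :
  sharp_adj m (hcube_adj q) w1 w2 -> sharp_adj m (hcube_adj q) w2 w1.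
Proof.
rewrite /sharp_adj; case/orP => [h|/andP[/eqP e h]]; apply/orP; [left|right].
  move: h; case: w1 => [[b1 v1]|?] //; case: w2 => [[b2 v2]|?] // /andP[/eqP -> h].
  by rewrite eqxx /= /hcube_adj diff_sym.
by rewrite e eqxx orbC.
Qed.

Unset Implicit Arguments.
Theorem lemma6 (m q : nat) :
  odd m -> 0 < m -> 1 <= q ->
  divides (sharp_adj m (hcube_adj q)) (hcube_adj (m + q)).
Proof.
move=> om m0 q1.
pose S := [set x : hcube_vertex m | ~~ par x].
have parS : forall i : 'I_#|S|, par (enum_val i) = false.
  by move=> i; have := enum_valP i; rewrite inE => /negbTE.
have inS : forall x, par x = false ->
   exists i : 'I_#|S|, enum_val i = x.
  move=> x px; have xS : x \in S by rewrite inE px.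
  by exists (enum_rank_in xS x); rewrite enum_rankK_in.
exists #|S|, (fun i => F (enum_val i)); split.
- move=> i w1 w2 /join_inj [e eb]; apply: pos_base_inj => //.
  exact: pth_pos_inj (pos_le _) (pos_le _) e.
- by move=> i w1 w2; apply: F_adj.
- move=> i j ij; rewrite -setI_eq0; apply/eqP/setP => E; rewrite !inE.
  apply/negbTE/negP => /andP[/imsetP[[w1 w2] hw ->] /imsetP[[u1 u2] hu e]].
  rewrite inE /= in hw; rewrite inE /= in hu.
  move/set2_eq: e => /(_ (hadj_neq (F_adj _ hw))) [[e1 e2]|[e1 e2]].
    have := core om (parS i) (parS j) e1 e2 hw hu.
    by move/enum_val_inj => eij; rewrite eij eqxx in ij.
  have hu' : sharp_adj m (hcube_adj q) u2 u1.
    exact: sharp_adj_sym.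
  have := core om (parS i) (parS j) e1 e2 hw hu'.
  by move/enum_val_inj => eij; rewrite eij eqxx in ij.
- have img : forall x (w1 w2 : sharp_vertex m (hcube_vertex q)), par x = false ->
      sharp_adj m (hcube_adj q) w1 w2 ->
      [set F x w1; F x w2] \in \bigcup_(i < #|S|) image_edges (sharp_adj m (hcube_adj q)) (F (enum_val i)).
    move=> x w1 w2 px hw; have [i ei] := inS x px.
    apply/bigcupP; exists i => //; apply/imsetP; exists (w1, w2); last by rewrite ei.
    by rewrite inE.
  apply/setP => E; apply/idP/idP.
    case/bigcupP => i _ /imsetP[[w1 w2] hw ->]; rewrite inE /= in hw.
    by apply/imsetP; exists (F (enum_val i) w1, F (enum_val i) w2) => //; rewrite inE /= F_adj.
  case/imsetP => [[a b] hab ->] /=; rewrite inE /= in hab.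
  rewrite (join_surj a) (join_surj b) in hab *.
  set y := [ffun i => a (lshift q i)] in hab *; set v := [ffun j => a (rshift m j)] in hab *.
  set y' := [ffun i => b (lshift q i)] in hab *; set v' := [ffun j => b (rshift m j)] in hab *.
  clearbody y v y' v'; move: hab; rewrite /hcube_adj card_join.
  move=> h.
  have : forall n1 n2, n1 + n2 == 1 -> (n1 == 0 /\ n2 == 1) \/ (n1 == 1 /\ n2 == 0).
    by move=> n1 n2; lia.
  move=> /(_ _ _ h).
  case=> [[dy hv] | [hy dv]].
  + move: dy; rewrite diff0 => /eqP <-.
    case py : (par y).
    * have px : par (pth y m) = false by rewrite par_pthE // py om.
      have := img (pth y m) (inl (true, v)) (inl (true, v')) px.
      by rewrite /F /= pthK; apply; rewrite /sharp_adj /= /hcube_adj hv.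
    * have := img y (inl (false, v)) (inl (false, v')) py.
      by rewrite /F /= pth0; apply; rewrite /sharp_adj /= /hcube_adj hv.
  + move: dv; rewrite diff0 => /eqP <-.
    case/cards1P: hy => c hc.
    have ey' : y' = pth (pth y c) c.+1.
      apply/ffunP => i; have := congr1 (fun A : {set 'I_m} => i \in A) hc.
      rewrite !inE !ffunE -val_eqE /= ltnS.
      by case: (ltngtP i c) => h1; case: (y i); case: (y' i).
    have [w1 [p1 b1]] := exists_pos v (ltnW (ltn_ord c)).
    have [w2 [p2 b2]] := exists_pos (m := m) v (ltn_ord c).
    have hw : sharp_adj m (hcube_adj q) w1 w2.
      by rewrite /sharp_adj b1 b2 p1 p2 eqxx /= eqxx !orbT.
    case py : (par (pth y c)).
    * have px : par (pth y' c) = false.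
        rewrite par_pthE ?(ltnW (ltn_ord c)) // ey' par_pthE // par_pthE ?(ltnW (ltn_ord c)) //.
        move: py; rewrite par_pthE ?(ltnW (ltn_ord c)) //=.
        by case: (par y); case: (odd c).
      have := img (pth y' c) w1 w2 px hw.
      rewrite /F p1 p2 b1 b2 pthK {2}ey' (pth_comm (pth y c)) pthK pthK setUC.
      done.
    * have := img (pth y c) w1 w2 py hw.
      by rewrite /F p1 p2 b1 b2 pthK -ey'.
Qed.
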